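(* If a graph $G$ of order $n(G)$ contains a universal vertex, then $\mathrm{sg_e}(G) \ge n(G)-1$. Moreover, if $G$ has exactly one universal vertex, then $\mathrm{sg_e}(G) = n(G)-1$.
   Context: All graphs are finite, simple and connected. A vertex $u$ is universal if $\deg_G(u) = n(G)-1$. A set $S \subseteq V(G)$ is a strong edge geodetic set of $G$ if one can assign to every unordered pair $\{u,v\}$ of distinct vertices of $S$ either one shortest $u,v$-path $P_{uv}$ in $G$ or no path, in such a way that every edge of $G$ lies on at least one of the assigned paths. The strong edge geodetic number $\mathrm{sg_e}(G)$ is the minimum cardinality of a strong edge geodetic set of $G$. *)

(* Defs.v *)
From mathcomp Require Import all_boot.
From mathcomp Require Import boolp.

Set Implicit Arguments.
Unset Strict Implicit.
Unset Printing Implicit Defensive.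

Section StrongEdgeGeodetic.
Variables (T : finType) (e : rel T).

Definition simple_connected_graph : Prop :=
  [/\ symmetric e, irreflexive e & forall x y : T, connect e x y].

Definition graph_order : nat := #|T|.

Definition deg (u : T) : nat := #|[set v | e u v]|.
Definition universal (u : T) : bool := deg u == #|T| - 1.

Definition is_walk (u v : T) (p : seq T) : bool := path e u p && (last u p == v).

(* a shortest u,v-path: a u,v-walk of minimum length (such walks are paths) *)
Definition shortest_path (u v : T) (p : seq T) : Prop :=
  is_walk u v p /\ forall q : seq T, is_walk u v q -> size p <= size q.

Definition edge_on (x y u : T) (p : seq T) : bool :=
  ((x, y) \in zip (u :: p) p) || ((y, x) \in zip (u :: p) p).

(* Unordered pairs {u,v} of distinct vertices are represented by the ordered
   pair with enum_rank u < enum_rank v.  An assignment P gives for such a pair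
   either one shortest u,v-path (Some p, the path being u :: p) or no path. *)
Definition strong_edge_geodetic (S : {set T}) : Prop :=
  exists P : T -> T -> option (seq T),
    (forall u v p, u \in S -> v \in S -> enum_rank u < enum_rank v ->
       P u v = Some p -> shortest_path u v p) /\
    (forall x y, e x y -> exists u v p,
       [/\ u \in S, v \in S, enum_rank u < enum_rank v,
           P u v = Some p & edge_on x y u p]).

(* strong edge geodetic number: minimum cardinality of a strong edge geodetic
   set (V(G) itself is one, so #|T| is a harmless default for the min) *)
Definition sge : nat :=
  \big[minn/#|T|]_(S : {set T} | `[< strong_edge_geodetic S >]) #|S|.

End StrongEdgeGeodetic.

(* Main.v *)
Require Import Defs.
From mathcomp Require Import all_boot.
From mathcomp Require Import boolp.
Set Implicit Arguments.
Unset Strict Implicit.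

Section H.
Variables (T : finType) (e : rel T).
Hypotheses (sym : symmetric e) (irr : irreflexive e).

Lemma full_adj w : #|[set v | e w v]| = #|T| - 1 -> forall v, v != w -> e w v.
Proof.
move=> Hd v nv.
have Hsub : [set v | e w v] \subset [set~ w].
  by apply/subsetP => y; rewrite !inE; apply: contraTneq => ->; rewrite irr.
have /eqP E : [set v | e w v] == [set~ w].
  by rewrite eqEcard Hsub cardsC1 Hd subn1 leqnn.
have : v \in [set~ w] by rewrite !inE.
by rewrite -E inE.
Qed.

Lemma univ_adj w : universal e w -> forall v, v != w -> e w v.
Proof. by move=> /eqP; apply: full_adj. Qed.

Lemma lower w S : universal e w -> strong_edge_geodetic e S -> #|T| - 1 <= #|S|.
Proof.
move=> /univ_adj Hw [P [Hsh Hcov]].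
rewrite subn1 -(cardsC1 w); apply: subset_leq_card.
apply/subsetP => x; rewrite !inE => xw.
have exw : e x w by rewrite sym; apply: Hw.
have [u [v [p [uS vS ruv Pp eo]]]] := Hcov x w exw.
have [/andP [pth /eqP lst] short] := Hsh u v p uS vS ruv Pp.
have uv : u != v by apply: contraTneq ruv => ->; rewrite ltnn.
have Hwalk1 : e u v -> size p <= 1.
  by move=> euv; apply: (short [:: v]); rewrite /is_walk /= euv eqxx.
have Hsz : size p <= 2.
  case euv : (e u v); first by apply: leq_trans (Hwalk1 euv) _.
  have uw : u != w.
    by apply: contraFneq euv => uw; rewrite uw; apply: Hw; rewrite -uw eq_sym.
  have vw : v != w.
    by apply: contraFneq euv => vw; rewrite vw sym; apply: Hw; rewrite -vw.
  apply: (short [:: w; v]); rewrite /is_walk /= eqxx Hw // andbT.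
  by rewrite sym Hw.
clear Pp short; move: p pth lst Hsz eo Hwalk1 => [|a [|b [|c r]]] //= pth lst _.
- move=> eo _; move: eo; rewrite /edge_on /= !inE !xpair_eqE.
  by case/orP => /andP [/eqP xe /eqP we]; rewrite ?xe ?we ?lst.
- move: pth => /andP [eua /andP [eab _]] eo H1.
  move: eo; rewrite /edge_on /= !inE !xpair_eqE -!orbA.
  case/or4P => /andP [/eqP xe /eqP we].
  + by rewrite xe.
  + have : e u v by rewrite -lst -we sym Hw // we lst.
    by move/H1.
  + have : e u v by rewrite -xe Hw // xe eq_sym.
    by move/H1.
  + by rewrite we lst.
Qed.

Lemma edge_onC (x y u : T) p : edge_on x y u p = edge_on y x u p.
Proof. by rewrite /edge_on orbC. Qed.

Lemma nonuniv z : ~~ universal e z -> exists t, (t != z) && ~~ e z t.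
Proof.
move=> nu; case: (pickP [pred t | (t != z) && ~~ e z t]) => [t Ht|H]; first by exists t.
case/negP: nu; apply/eqP; rewrite /deg.
have -> : [set v | e z v] = [set~ z].
  apply/setP => t; rewrite !inE; case tz: (t == z); first by rewrite (eqP tz) irr.
  by have := H t; rewrite /= tz /=; case: (e z t).
by rewrite cardsC1 subn1.
Qed.

Lemma rank_cases (u v : T) : u != v -> (enum_rank u < enum_rank v) || (enum_rank v < enum_rank u).
Proof. by move=> uv; rewrite -neq_ltn; apply: contra uv => /eqP /val_inj /enum_rank_inj ->. Qed.

Lemma upper w : universal e w -> (forall x, universal e x -> x = w) ->
  strong_edge_geodetic e [set~ w].
Proof.
move=> /univ_adj Hw Hu.
exists (fun u v => Some (if e u v then [:: v] else [:: w; v])); split.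
  move=> u v p; rewrite !inE => uw vw ruv [<-].
  have uv : u != v by apply: contraTneq ruv => ->; rewrite ltnn.
  case euv: (e u v); split.
  - by rewrite /is_walk /= euv eqxx.
  - case=> [|b q] //; rewrite /is_walk /= => /eqP uv'; by move: uv; rewrite uv' eqxx.
  - by rewrite /is_walk /= sym !Hw // eqxx.
  - case=> [|b [|c q]] //; rewrite /is_walk /=.
      by move=> /eqP uv'; move: uv; rewrite uv' eqxx.
    by move=> /andP [/andP [eub _] /eqP bv]; move: euv; rewrite -bv eub.
have Hzw : forall z, z != w -> exists u v p,
       [/\ u \in [set~ w], v \in [set~ w], enum_rank u < enum_rank v,
           Some (if e u v then [:: v] else [:: w; v]) = Some p & edge_on z w u p].
  move=> z zw.
  have nu : ~~ universal e z by apply/negP => /Hu /eqP; rewrite (negPf zw).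
  have [t /andP [tz nzt]] := nonuniv nu.
  have tw : t != w by apply: contraNneq nzt => ->; rewrite sym; apply: Hw.
  case/orP: (rank_cases tz) => r.
  - exists t, z, [:: w; z]; rewrite !inE tw zw r sym (negPf nzt); split => //.
    by rewrite /edge_on /= !inE eqxx !orbT.
  - exists z, t, [:: w; t]; rewrite !inE tw zw r (negPf nzt); split => //.
    by rewrite /edge_on /= !inE eqxx.
move=> x y exy.
case xw: (x == w).
  rewrite (eqP xw) in exy *.
  have yw : y != w by apply: contraTneq exy => ->; rewrite irr.
  have [u [v [p [? ? ? ? eo]]]] := Hzw y yw.
  by exists u, v, p; split => //; rewrite edge_onC.
case yw: (y == w).
  rewrite (eqP yw); exact: Hzw (negbT xw).
have xy : x != y by apply: contraTneq exy => ->; rewrite irr.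
case/orP: (rank_cases xy) => r.
  exists x, y, [:: y]; rewrite !inE xw yw r exy; split => //.
  by rewrite /edge_on /= !inE eqxx.
exists y, x, [:: x]; rewrite !inE xw yw r sym exy; split => //.
by rewrite /edge_on /= !inE eqxx orbT.
Qed.
End H.

Lemma bigmin_le_seq (I : eqType) (r : seq I) (P : pred I) (F : I -> nat) x j :
  j \in r -> P j -> \big[minn/x]_(i <- r | P i) F i <= F j.
Proof.
elim: r => [|a r IH] //= jr Pj; rewrite big_cons.
case: (eqVneq j a) jr => [<- _|ja]; first by rewrite Pj geq_minl.
rewrite inE (negPf ja) /= => jr.
case: (P a); last exact: IH.
by rewrite geq_min IH ?orbT.
Qed.

Theorem mainTheorem11 (T : finType) (e : rel T) :
  simple_connected_graph e ->
  (exists u : T, universal e u) ->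
  graph_order T - 1 <= sge e /\
  (#|[set u : T | universal e u]| = 1 -> sge e = graph_order T - 1).
Proof.
case=> sym irr _ [w Uw].
have low : #|T| - 1 <= sge e.
  rewrite /sge; apply: (big_ind (fun m => #|T| - 1 <= m)).
  - exact: leq_subr.
  - by move=> a b Ha Hb; rewrite leq_min Ha Hb.
  - by move=> S /asboolP HS; apply: (lower sym irr Uw HS).
split; first exact: low.
move=> /eqP /cards1P [z Hz].
have Hu : forall x, universal e x -> x = w.
  move=> x Ux.
  have : x \in [set u | universal e u] by rewrite inE.
  have : w \in [set u | universal e u] by rewrite inE.
  by rewrite Hz !inE => /eqP -> /eqP ->.
have HS := upper sym irr Uw Hu.
apply/eqP; rewrite eqn_leq low andbT /graph_order.
rewrite /sge subn1 -(cardsC1 w).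
apply: bigmin_le_seq; first exact: mem_index_enum.
by apply/asboolP.
Qed.
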